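(* Let $R$ be the ring of integers of a nonarchimedean local field $F$ of characteristic not $2$ in which $2$ is a prime element. Any even $R$-lattice of rank $4$ that primitively represents all even $R$-lattices of rank $2$ is isometric to $\mathbb{H}^2$.
   Context: An $R$-lattice is a finitely generated $R$-submodule of a quadratic space $(V,B)$ over $F$ with $Q(v)=B(v,v)$, assumed integral ($B(L,L)\subseteq R$) and nondegenerate; it is even if $Q(L)\subseteq 2R$. A representation is an $R$-linear map preserving $B$; it is primitive if its image is a direct summand. $\mathbb{H}$ is the binary lattice with Gram matrix $\begin{pmatrix}0&1\\1&0\end{pmatrix}$ and $\mathbb{H}^2=\mathbb{H}\perp\mathbb{H}$. *)

(* Defs.v *)
From HB Require Import structures.
From mathcomp Require Import all_boot all_order all_algebra.
Set Implicit Arguments. Unset Strict Implicit. Unset Printing Implicit Defensive.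
Import Order.TTheory GRing.Theory Num.Theory.
Local Open Scope ring_scope.

Definition dvdR (R : comNzRingType) (a b : R) : Prop := exists c : R, b = a * c.

(* R is the ring of integers of a nonarchimedean local field F (= Frac R)
   of characteristic not 2 in which 2 is a prime element.  Equivalently:
   R is a complete discrete valuation ring with finite residue field whose
   maximal ideal is generated by 2 (2 <> 0 gives char F <> 2). *)
Definition dyadic_local_integers (R : idomainType) : Prop :=
  [/\ (2%:R : R) != 0,
      ~~ ((2%:R : R) \is a GRing.unit),
      (forall x : R, x != 0 ->
         exists (k : nat) (u : R), u \is a GRing.unit /\ x = u * 2%:R ^+ k),
      (exists s : seq R, forall x : R, exists2 y, y \in s & dvdR 2%:R (x - y))
    &
      (forall a : nat -> R,
         (forall n, dvdR (2%:R ^+ n) (a n.+1 - a n)) ->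
         exists l : R, forall n, dvdR (2%:R ^+ n) (l - a n))].

(* An R-lattice of rank n, given by its Gram matrix in a basis (lattices over
   the PID R are free): symmetric, integral (entries in R), nondegenerate. *)
Definition lattice (R : idomainType) (n : nat) (G : 'M[R]_n) : Prop :=
  G^T = G /\ \det G != 0.

Definition even_lattice (R : idomainType) (n : nat) (G : 'M[R]_n) : Prop :=
  lattice G /\ forall v : 'rV[R]_n, dvdR 2%:R ((v *m G *m v^T) 0 0).

(* X (rows = images of the basis of L) is a representation of L (Gram GL)
   by M (Gram GM): it preserves the bilinear form. *)
Definition representation (R : idomainType) (m n : nat)
  (GM : 'M[R]_m) (GL : 'M[R]_n) (X : 'M[R]_(n, m)) : Prop :=
  X *m GM *m X^T = GL.

(* The image of X (the R-span of its rows) is a direct summand of R^m,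
   i.e. it is the image of an idempotent R-linear endomorphism P of R^m. *)
Definition primitive_image (R : idomainType) (m n : nat) (X : 'M[R]_(n, m)) : Prop :=
  exists P : 'M[R]_m, P *m P = P /\
    (forall v : 'rV[R]_m, exists c : 'rV[R]_n, v *m P = c *m X) /\
    (forall c : 'rV[R]_n, exists v : 'rV[R]_m, c *m X = v *m P).

Definition prim_represents (R : idomainType) (m n : nat)
  (GM : 'M[R]_m) (GL : 'M[R]_n) : Prop :=
  exists X : 'M[R]_(n, m), representation GM GL X /\ primitive_image X.

Definition isometric (R : idomainType) (n : nat) (G H : 'M[R]_n) : Prop :=
  exists U : 'M[R]_n, U \in unitmx /\ U *m G *m U^T = H.

Definition hyp (R : idomainType) : 'M[R]_2 :=
  \matrix_(i < 2, j < 2) (if i == j then 0 else 1).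
Definition hyp2 (R : idomainType) : 'M[R]_4 := block_mx (hyp R) 0 0 (hyp R).

(* Main.v *)
Require Import Defs.
From HB Require Import structures.
From mathcomp Require Import all_boot all_order all_algebra perm fingroup.
From mathcomp Require Import ring zify.
From Stdlib Require Import ClassicalEpsilon Classical.
Import GRing.Theory.
Local Open Scope ring_scope.
Set Implicit Arguments. Unset Strict Implicit. Unset Printing Implicit Defensive.

Section Dyadic.
Variable R : idomainType.
Hypothesis hR : dyadic_local_integers R.
Local Notation two := (2%:R : R).
Local Notation dv := (@dvdR R).

Lemma two_neq0 : two != 0. Proof. by case: hR. Qed.
Lemma two_nunit : two \isn't a GRing.unit. Proof. by case: hR. Qed.
Lemma hR_val (x : R) : x != 0 -> exists (k : nat) (u : R), u \is a GRing.unit /\ x = u * two ^+ k.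
Proof. by case: hR => _ _ H _ _; apply: H. Qed.
Lemma hR_fin : exists s : seq R, forall x : R, exists2 y, y \in s & dv two (x - y).
Proof. by case: hR. Qed.
Lemma hR_compl (a : nat -> R) : (forall n, dv (two ^+ n) (a n.+1 - a n)) ->
  exists l : R, forall n, dv (two ^+ n) (l - a n).
Proof. by case: hR => _ _ _ _ H; apply: H. Qed.

Lemma expf2_neq0 n : two ^+ n != 0. Proof. by rewrite expf_neq0 // two_neq0. Qed.

Lemma dv_refl a : dv a a. Proof. by exists 1; rewrite mulr1. Qed.
Lemma dv0 a : dv a 0. Proof. by exists 0; rewrite mulr0. Qed.
Lemma dvD a x y : dv a x -> dv a y -> dv a (x + y).
Proof. by move=> [c ->] [d ->]; exists (c + d); rewrite mulrDr. Qed.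
Lemma dvN a x : dv a x -> dv a (- x).
Proof. by move=> [c ->]; exists (- c); rewrite mulrN. Qed.
Lemma dvB a x y : dv a x -> dv a y -> dv a (x - y).
Proof. by move=> hx hy; apply: dvD => //; apply: dvN. Qed.
Lemma dvMl a x y : dv a y -> dv a (x * y).
Proof. by move=> [c ->]; exists (x * c); rewrite mulrCA. Qed.
Lemma dvMr a x y : dv a x -> dv a (x * y).
Proof. by move=> [c ->]; exists (c * y); rewrite mulrA. Qed.
Lemma dv_trans a b x : dv a b -> dv b x -> dv a x.
Proof. by move=> [c ->] [d ->]; exists (c * d); rewrite mulrA. Qed.
Lemma dvM a b x y : dv a x -> dv b y -> dv (a * b) (x * y).
Proof. by move=> [c ->] [d ->]; exists (c * d); rewrite mulrACA. Qed.
Lemma dv_mul a x : dv a (a * x). Proof. by exists x. Qed.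
Lemma dv_pow m n : (m <= n)%N -> dv (two ^+ m) (two ^+ n).
Proof. by move=> h; exists (two ^+ (n - m)); rewrite -exprD subnKC. Qed.
Lemma dv_powW m n x : (m <= n)%N -> dv (two ^+ n) x -> dv (two ^+ m) x.
Proof. by move=> h; apply: dv_trans; apply: dv_pow. Qed.
Lemma dv_eq a x y : x = y -> dv a x -> dv a y. Proof. by move=> ->. Qed.

Lemma dv_cancel n x y : dv (two ^+ n * x) (two ^+ n * y) -> dv x y.
Proof.
move=> [c]; rewrite -mulrA => /(mulfI (expf2_neq0 n)) ->; exists c => //.
Qed.

Lemma dv_cancel2 x y : dv (two * x) (two * y) -> dv x y.
Proof. by have := @dv_cancel 1 x y; rewrite expr1. Qed.

Lemma unit_ndv2 u : u \is a GRing.unit -> ~ dv two u.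
Proof.
move=> hu [c hc]; move: hu; rewrite hc unitrM => /andP[h _].
by move: two_nunit; rewrite h.
Qed.

Lemma dv2_nunit u : dv two u -> u \isn't a GRing.unit.
Proof. by move=> h; apply/negP => /unit_ndv2. Qed.

Lemma unit_or_dv2 x : x \is a GRing.unit \/ dv two x.
Proof.
have [->|nz] := eqVneq x 0; first by right; apply: dv0.
have [[|k] [u [hu ->]]] := hR_val nz; first by left; rewrite expr0 mulr1.
by right; rewrite exprS mulrCA; apply: dv_mul.
Qed.

Lemma dv2_mul x y : dv two (x * y) -> dv two x \/ dv two y.
Proof.
move=> h; case: (unit_or_dv2 x) => [hx|]; last by left.
case: (unit_or_dv2 y) => [hy|]; last by right.
by exfalso; apply: (unit_ndv2 _ h); rewrite unitrM hx hy.
Qed.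

Lemma dv2_sq x : dv two (x ^+ 2) -> dv two x.
Proof. by rewrite expr2 => /dv2_mul []. Qed.

Lemma unitD_dv2 u x : u \is a GRing.unit -> dv two x -> (u + x) \is a GRing.unit.
Proof.
move=> hu hx; case: (unit_or_dv2 (u + x)) => // h.
by exfalso; apply: (unit_ndv2 hu); apply: (dv_eq (addrK x u)); apply: dvB.
Qed.

Lemma val_uniq (u1 u2 : R) a b : u1 \is a GRing.unit -> u2 \is a GRing.unit ->
  u1 * two ^+ a = u2 * two ^+ b -> a = b /\ u1 = u2.
Proof.
wlog le_ab : u1 u2 a b / (a <= b)%N.
  move=> W h1 h2 e; case: (leqP a b) => hab; first exact: W.
  by have [-> ->] := W u2 u1 b a (ltnW hab) h2 h1 (esym e).
move=> h1 h2 e.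
have e' : u1 = u2 * two ^+ (b - a).
  apply: (mulIf (expf2_neq0 a)); rewrite e -mulrA -exprD subnK //.
case: (ltnP a b) => hab.
  exfalso; apply: (unit_ndv2 h1); rewrite e'.
  rewrite -(subnSK hab) exprS mulrCA; apply: dv_mul.
have eab : a = b by apply/eqP; rewrite eqn_leq le_ab hab.
by split => //; rewrite e' eab subnn expr0 mulr1.
Qed.

Lemma all_dv0 x : (forall n, dv (two ^+ n) x) -> x = 0.
Proof.
move=> h; apply/eqP; apply/negPn/negP => nz.
have [k [u [hu ex]]] := hR_val nz.
have [c hc] := h k.+1.
apply: (unit_ndv2 hu); exists c.
apply: (mulIf (expf2_neq0 k)); rewrite -ex hc exprS.
by ring.
Qed.

Lemma dv_one x : dv (two ^+ 0) x. Proof. by exists x; rewrite expr0 mul1r. Qed.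

Lemma sqrt_1_8 r : exists s, s ^+ 2 = 1 + two ^+ 3 * r.
Proof.
pose f := fun y : R => r - two * y ^+ 2.
pose a := fun n => iter n f r.
have ha : forall n, dv (two ^+ n) (a n.+1 - a n).
  elim=> [|n IH]; first exact: dv_one.
  have -> : a n.+2 - a n.+1 = (two * (a n.+1 - a n)) * (- (a n.+1 + a n)).
    rewrite /a /= -/(iter n.+1 f r) /f. set u := iter n.+1 f r. set v := iter n _ _.
    rewrite /u /= -/v /f; ring.
  by apply: dvMr; rewrite exprS; apply: dvM => //; apply: dv_refl.
have [l hl] := hR_compl ha.
have el : l = r - two * l ^+ 2.
  apply/eqP; rewrite -subr_eq0; apply/eqP; apply: all_dv0 => n.
  have -> : l - (r - two * l ^+ 2) = (l - a n.+1) + two * (l - a n) * (l + a n).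
    rewrite /a /= /f; ring.
  apply: dvD; first by apply: (dv_powW (leqnSn n)).
  by apply: dvMr; apply: dvMl.
have er : r = l + two * l ^+ 2 by rewrite [X in X + _]el; ring.
exists (1 + two ^+ 2 * l); rewrite er; ring.
Qed.

Lemma sq_lemma D δ d τ t : δ \is a GRing.unit -> D = δ * two ^+ d ->
  τ \is a GRing.unit -> dv (two ^+ (d + 3)) (t ^+ 2 - D * τ ^+ 2) ->
  exists r, D = r ^+ 2.
Proof.
move=> hδ hD hτ [ρ hρ].
pose ω := δ * τ ^+ 2 + two ^+ 3 * ρ.
have hω : ω \is a GRing.unit.
  apply: unitD_dv2; first by rewrite unitrM hδ unitrX.
  by rewrite exprS -mulrA; apply: dv_mul.
have et : t ^+ 2 = ω * two ^+ d.
  have -> : t ^+ 2 = (t ^+ 2 - D * τ ^+ 2) + D * τ ^+ 2 by rewrite subrK.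
  by rewrite hρ hD /ω exprD; ring.
have tnz : t != 0.
  apply/eqP => t0; move: et; rewrite t0 expr0n /= => /esym/eqP.
  by rewrite mulf_eq0 (negbTE (expf2_neq0 d)) orbF => /eqP w0; move: hω; rewrite w0 unitr0.
have [e [u [hu ht]]] := hR_val tnz.
have [ed eu] : (e + e)%N = d /\ u ^+ 2 = ω.
  apply: val_uniq; [by rewrite unitrX | exact: hω |].
  by rewrite -et ht exprMn -exprM mulnC mul2n addnn.
have [σ hσ] := sqrt_1_8 (- ρ * u^-1 ^+ 2).
have e1 : σ ^+ 2 * u ^+ 2 = δ * τ ^+ 2.
  have -> : σ ^+ 2 * u ^+ 2 = u ^+ 2 - two ^+ 3 * ρ * (u^-1 * u) ^+ 2.
    by rewrite hσ; ring.
  by rewrite mulVr // expr1n mulr1 eu /ω addrK.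
exists (σ * u * τ^-1 * two ^+ e).
rewrite hD -ed exprD.
have -> : (σ * u * τ^-1 * two ^+ e) ^+ 2 = (σ ^+ 2 * u ^+ 2) * τ^-1 ^+ 2 * (two ^+ e * two ^+ e) by ring.
rewrite e1.
have -> : δ * τ ^+ 2 * τ^-1 ^+ 2 = δ * (τ * τ^-1) ^+ 2 by ring.
by rewrite mulrV // expr1n mulr1.
Qed.

Definition bP (P : Prop) : bool := if excluded_middle_informative P then true else false.
Lemma bPP (P : Prop) : reflect P (bP P).
Proof. by rewrite /bP; case: excluded_middle_informative => h; constructor. Qed.

Local Notation cong x y := (dv two (x - y)).

Lemma cong_sym x y : cong x y -> cong y x.
Proof. by move=> h; rewrite -opprB; apply: dvN. Qed.
Lemma cong_trans x y z : cong x y -> cong y z -> cong x z.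
Proof. by move=> h1 h2; rewrite -(subrKA y); apply: dvD. Qed.
Lemma cong_phi x y : cong x y -> cong (x ^+ 2 + x) (y ^+ 2 + y).
Proof.
move=> h; have -> : x ^+ 2 + x - (y ^+ 2 + y) = (x - y) * (x + y + 1) by ring.
exact: dvMr.
Qed.

Lemma no_surj : ~ (forall y, exists t, cong (t ^+ 2 + t) y).
Proof.
move=> surj.
have [s hs] := hR_fin.
pose n := size s.
pose sn := fun j => nth 0 s j.
have cex : forall x, exists j, (j < n)%N && bP (cong x (sn j)).
  move=> x; have [y ys hy] := hs x; exists (index y s).
  by rewrite index_mem ys /sn nth_index //; apply/bPP.
pose κ := fun x => ex_minn (cex x).
have κP : forall x, (κ x < n)%N /\ cong x (sn (κ x)).
  by move=> x; rewrite /κ; case: ex_minnP => m /andP[h1 /bPP h2] _.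
have κmin : forall x j, (j < n)%N -> cong x (sn j) -> (κ x <= j)%N.
  by move=> x j hj hc; rewrite /κ; case: ex_minnP => m _ /(_ j); apply; rewrite hj; apply/bPP.
have κeq : forall x y, cong x y -> κ x = κ y.
  move=> x y hxy; apply/eqP; rewrite eqn_leq; apply/andP; split.
    apply: κmin; first by case: (κP y).
    by apply: cong_trans hxy _; case: (κP y).
  apply: κmin; first by case: (κP x).
  by apply: cong_trans (cong_sym hxy) _; case: (κP x).
pose ord := fun x => Ordinal (proj1 (κP x)).
pose φ := fun x : R => x ^+ 2 + x.
pose K := [set i : 'I_n | κ (sn i) == i].
pose ψ := fun i : 'I_n => ord (φ (sn i)).
have ordK : forall x, ord x \in K.
  move=> x; rewrite inE /=; apply/eqP; apply: esym; apply: κeq; by case: (κP x).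
have himg : [set ψ x | x in K] = K.
  apply/setP => k; apply/imsetP/idP.
    by move=> [i _ ->]; apply: ordK.
  rewrite inE => /eqP hk.
  have [t ht] := surj (sn k).
  exists (ord t); first exact: ordK.
  apply: val_inj => /=.
  rewrite -[in LHS]hk; apply: esym; apply: κeq.
  apply: (cong_trans (y := φ t)); last exact: ht.
  apply: cong_phi; apply: cong_sym; by case: (κP t).
have inj : {in K &, injective ψ}.
  by apply/imset_injP; rewrite himg.
have e01 : ψ (ord 0) = ψ (ord 1).
  apply: val_inj => /=.
  have h0 : cong (φ (sn (κ 0))) (φ 0).
    by apply: cong_phi; apply: cong_sym; case: (κP 0).
  have h1 : cong (φ (sn (κ 1))) (φ 1).
    by apply: cong_phi; apply: cong_sym; case: (κP 1).
  have h01 : cong (φ 1) (φ 0).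
    have -> : φ 1 - φ 0 = two * 1 by rewrite /φ; ring.
    exact: dv_mul.
  apply: κeq; apply: (cong_trans h0); apply: (cong_trans (cong_sym h01)).
  exact: cong_sym h1.
have := inj _ _ (ordK 0) (ordK 1) e01.
move/(congr1 val) => /= e.
have : cong 0 1.
  apply: (cong_trans (y := sn (κ 0))); first by case: (κP 0).
  rewrite e; apply: cong_sym; by case: (κP 1).
rewrite sub0r => /dvN; rewrite opprK.
by apply: unit_ndv2; rewrite unitr1.
Qed.


Lemma exists_aniso : exists ρ : R, forall c1 c2 : R,
  (c1 \is a GRing.unit \/ c2 \is a GRing.unit) ->
  (c1 ^+ 2 + c1 * c2 + ρ * c2 ^+ 2) \is a GRing.unit.
Proof.
apply: NNPP => hn; apply: no_surj => y.
have := not_ex_all_not _ _ hn (- y) => /not_all_ex_not [c1 /not_all_ex_not [c2 hc]].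
have [hu hnu] := imply_to_and _ _ hc.
case: (unit_or_dv2 c2) => h2.
  exists (c1 * c2^-1).
  case: (unit_or_dv2 (c1 ^+ 2 + c1 * c2 + - y * c2 ^+ 2)) => // hd.
  have : dv two ((c1 * c2^-1) ^+ 2 + c1 * c2^-1 - y) \/ dv two (c2 ^+ 2).
    apply: dv2_mul.
    have -> : ((c1 * c2^-1) ^+ 2 + c1 * c2^-1 - y) * c2 ^+ 2 =
      (c1 ^+ 2 + c1 * c2 + - y * c2 ^+ 2) + (c1 ^+ 2 * ((c2^-1 * c2) ^+ 2 - 1) + c1 * c2 * (c2^-1 * c2 - 1)) by ring.
    by rewrite mulVr // expr1n !subrr !mulr0 !addr0.
  case=> // h; exfalso; apply: (unit_ndv2 _ h); by rewrite unitrX.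
case: hu => hu; last by exfalso; apply: (unit_ndv2 hu).
exfalso; apply: hnu.
have -> : c1 ^+ 2 + c1 * c2 + - y * c2 ^+ 2 = c1 ^+ 2 + (c1 * c2 + - y * c2 ^+ 2) by ring.
apply: unitD_dv2; first by rewrite unitrX.
by apply: dvD; [apply: dvMl | rewrite expr2 mulrA; apply: dvMl].
Qed.

Lemma content z w : z != 0 \/ w != 0 -> exists e z' w',
  z = two ^+ e * z' /\ w = two ^+ e * w' /\ (z' \is a GRing.unit \/ w' \is a GRing.unit).
Proof.
have [->|zn] := eqVneq z 0; have [->|wn] := eqVneq w 0; case=> // _.
- have [k [u [hu ->]]] := hR_val wn; exists k, 0, u.
  by rewrite mulr0 mulrC; split=> //; split=> //; right.
- have [k [u [hu ->]]] := hR_val zn; exists k, u, 0.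
  by rewrite mulr0 mulrC; split=> //; split=> //; left.
- have [a [u1 [h1 ->]]] := hR_val zn; have [b [u2 [h2 ->]]] := hR_val wn.
  case: (leqP a b) => hab.
    exists a, u1, (u2 * two ^+ (b - a)); split; first by rewrite mulrC.
    split; last by left.
    by rewrite mulrCA -exprD subnKC.
  exists b, (u1 * two ^+ (a - b)), u2; split; last by split; [rewrite mulrC | right].
  by rewrite mulrCA -exprD subnKC // ltnW.
- have [a [u1 [h1 ->]]] := hR_val zn; have [b [u2 [h2 ->]]] := hR_val wn.
  case: (leqP a b) => hab.
    exists a, u1, (u2 * two ^+ (b - a)); split; first by rewrite mulrC.
    split; last by left.
    by rewrite mulrCA -exprD subnKC.
  exists b, (u1 * two ^+ (a - b)), u2; split; last by split; [rewrite mulrC | right].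
  by rewrite mulrCA -exprD subnKC // ltnW.
Qed.


Lemma K2 p q r s : dv two (p * s - q * r) -> exists c1 c2,
  (c1 \is a GRing.unit \/ c2 \is a GRing.unit) /\
  dv two (c1 * p + c2 * r) /\ dv two (c1 * q + c2 * s).
Proof.
move=> hdet.
have A : forall c1 c2 e1 e2, c1 \is a GRing.unit \/ c2 \is a GRing.unit ->
   e1 = c1 * p + c2 * r -> e2 = c1 * q + c2 * s -> dv two e1 -> dv two e2 ->
   exists c1 c2, (c1 \is a GRing.unit \/ c2 \is a GRing.unit) /\
   dv two (c1 * p + c2 * r) /\ dv two (c1 * q + c2 * s).
  by move=> c1 c2 e1 e2 hu -> ->; exists c1, c2.
case: (unit_or_dv2 p) => hp.
  apply: (A r (- p) 0 (- (p * s - q * r))); [by right; rewrite unitrN| ring | ring | apply: dv0 | exact: dvN].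
case: (unit_or_dv2 r) => hr.
  apply: (A r (- p) 0 (- (p * s - q * r))); [by left| ring | ring | apply: dv0 | exact: dvN].
case: (unit_or_dv2 q) => hq.
  apply: (A s (- q) (p * s - q * r) 0); [by right; rewrite unitrN| ring | ring | exact: hdet | apply: dv0].
case: (unit_or_dv2 s) => hs.
  apply: (A s (- q) (p * s - q * r) 0); [by left| ring | ring | exact: hdet | apply: dv0].
apply: (A 1 0 p q); [by left; rewrite unitr1 | ring | ring | exact: hp | exact: hq].
Qed.

Lemma dv2_pow k : (0 < k)%N -> dv two (two ^+ k).
Proof. by move=> hk; have := dv_pow hk; rewrite expr1. Qed.

Lemma addr_eqsub (a b c : R) : a + b = c -> b = c - a.
Proof. by move=> <-; rewrite addrC addKr. Qed.

Definition Qf (m0 m1 m2 z w : R) := m0 * z ^+ 2 + two * m1 * z * w + m2 * w ^+ 2.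
Definition Bf (m0 m1 m2 z w z' w' : R) := m0 * z * z' + m1 * (z * w' + w * z') + m2 * w * w'.

Lemma approx_iso m0 m1 m2 δ d z w : δ \is a GRing.unit ->
  m1 ^+ 2 - m0 * m2 = δ * two ^+ d ->
  (z \is a GRing.unit \/ w \is a GRing.unit) ->
  dv (two ^+ (d + 3)) (Qf m0 m1 m2 z w) ->
  exists r, m1 ^+ 2 - m0 * m2 = r ^+ 2.
Proof.
move=> hδ hD [hz|hw] hQ.
  apply: (sq_lemma (t := m2 * w + m1 * z) hδ hD hz).
  have -> : (m2 * w + m1 * z) ^+ 2 - (m1 ^+ 2 - m0 * m2) * z ^+ 2 = m2 * Qf m0 m1 m2 z w.
    by rewrite /Qf; ring.
  exact: dvMl.
apply: (sq_lemma (t := m0 * z + m1 * w) hδ hD hw).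
have -> : (m0 * z + m1 * w) ^+ 2 - (m1 ^+ 2 - m0 * m2) * w ^+ 2 = m0 * Qf m0 m1 m2 z w.
  by rewrite /Qf; ring.
exact: dvMl.
Qed.

Lemma S1_scalar m0 m1 m2 δ d x1 y1 x2 y2 t11 t12 t21 t22 :
  δ \is a GRing.unit -> m1 ^+ 2 - m0 * m2 = δ * two ^+ d ->
  two * x1 * y1 + Qf m0 m1 m2 t11 t12 = 0 ->
  two * x2 * y2 + Qf m0 m1 m2 t21 t22 = 0 ->
  x1 * y2 + x2 * y1 + Bf m0 m1 m2 t11 t12 t21 t22 = two ^+ (d + 2) ->
  (forall c1 c2, dv two (c1 * x1 + c2 * x2) -> dv two (c1 * y1 + c2 * y2) ->
     dv two (c1 * t11 + c2 * t21) -> dv two (c1 * t12 + c2 * t22) ->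
     dv two c1 /\ dv two c2) ->
  exists r, m1 ^+ 2 - m0 * m2 = r ^+ 2.
Proof.
move=> hδ hD E1 E2 E3 Inj.
set K := two ^+ (d + 2) in E3.
set D := m1 ^+ 2 - m0 * m2 in hD *.
set τ := t11 * t22 - t12 * t21.
set Δ := x1 * y2 - x2 * y1.
have eQ1 : Qf m0 m1 m2 t11 t12 = - (two * x1 * y1) by rewrite (addr_eqsub E1) sub0r.
have eQ2 : Qf m0 m1 m2 t21 t22 = - (two * x2 * y2) by rewrite (addr_eqsub E2) sub0r.
have eB : Bf m0 m1 m2 t11 t12 t21 t22 = K - (x1 * y2 + x2 * y1) by rewrite (addr_eqsub E3).
have key : (Δ - K) ^+ 2 - D * τ ^+ 2 = two ^+ 2 * K * (x2 * y1).
  have -> : D * τ ^+ 2 = (Bf m0 m1 m2 t11 t12 t21 t22) ^+ 2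
       - Qf m0 m1 m2 t11 t12 * Qf m0 m1 m2 t21 t22.
    by rewrite /D /τ /Bf /Qf; ring.
  rewrite eQ1 eQ2 eB /Δ; ring.
have Kd : dv (two ^+ (d + 3)) (two ^+ 2 * K * (x2 * y1)).
  apply: dvMr; rewrite /K -exprD; apply: dv_pow.
  by lia.
have dK : dv two K by apply: dv2_pow; rewrite addn2.
case: (unit_or_dv2 τ) => hτ.
  by apply: (sq_lemma (t := Δ - K) hδ hD hτ); rewrite key.
have hΔ : dv two Δ.
  case: (unit_or_dv2 Δ) => // hu; exfalso.
  have ht : (Δ - K) \is a GRing.unit by apply: unitD_dv2 => //; apply: dvN.
  have : (D * τ ^+ 2) \is a GRing.unit.
    have -> : D * τ ^+ 2 = (Δ - K) ^+ 2 + - (two ^+ 2 * K * (x2 * y1)) by rewrite -key; ring.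
    apply: unitD_dv2; first by rewrite unitrX.
    by apply: dvN; rewrite expr2 -!mulrA; apply: dv_mul.
  apply/negP; apply: dv2_nunit; apply: dvMl; rewrite expr2; exact: dvMr.
have fin : forall c1 c2, (c1 \is a GRing.unit \/ c2 \is a GRing.unit) ->
    dv two (c1 * x1 + c2 * x2) -> dv two (c1 * y1 + c2 * y2) ->
    dv (two ^+ (d + 3)) (Qf m0 m1 m2 (c1 * t11 + c2 * t21) (c1 * t12 + c2 * t22)) ->
    exists r, D = r ^+ 2.
  move=> c1 c2 hc hx hy hq.
  apply: (approx_iso hδ hD _ hq).
  case: (unit_or_dv2 (c1 * t11 + c2 * t21)) => hz; first by left.
  case: (unit_or_dv2 (c1 * t12 + c2 * t22)) => hw; first by right.
  have [h1 h2] := Inj _ _ hx hy hz hw.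
  by exfalso; case: hc => hc; [apply: (unit_ndv2 hc h1) | apply: (unit_ndv2 hc h2)].
have QM : forall c1 c2, Qf m0 m1 m2 (c1 * t11 + c2 * t21) (c1 * t12 + c2 * t22) =
   c1 ^+ 2 * Qf m0 m1 m2 t11 t12 + two * c1 * c2 * Bf m0 m1 m2 t11 t12 t21 t22
   + c2 ^+ 2 * Qf m0 m1 m2 t21 t22.
  by move=> c1 c2; rewrite /Qf /Bf; ring.
have KK : forall u v, dv (two ^+ (d + 3)) (two * K * u * v).
  move=> u v; have -> : two * K * u * v = (two * K) * (u * v) by ring.
  apply: dvMr.
  by rewrite /K -exprS; apply: dv_pow; lia.
have caseX : (x1 \is a GRing.unit \/ x2 \is a GRing.unit) -> exists r, D = r ^+ 2.
  move=> hu; apply: (fin x2 (- x1)).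
  - by case: hu => h; [right; rewrite unitrN | left].
  - have -> : x2 * x1 + - x1 * x2 = 0 by ring.
    by apply: dv0.
  - have -> : x2 * y1 + - x1 * y2 = - Δ by rewrite /Δ; ring.
    by apply: dvN.
  rewrite QM eQ1 eQ2 eB.
  have -> : x2 ^+ 2 * - (two * x1 * y1) + two * x2 * - x1 * (K - (x1 * y2 + x2 * y1)) +
     (- x1) ^+ 2 * - (two * x2 * y2) = - (two * K * x1 * x2) by ring.
  exact/dvN/KK.
have caseY : (y1 \is a GRing.unit \/ y2 \is a GRing.unit) -> exists r, D = r ^+ 2.
  move=> hu; apply: (fin y2 (- y1)).
  - by case: hu => h; [right; rewrite unitrN | left].
  - have -> : y2 * x1 + - y1 * x2 = Δ by rewrite /Δ; ring.
    by [].
  - have -> : y2 * y1 + - y1 * y2 = 0 by ring.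
    by apply: dv0.
  rewrite QM eQ1 eQ2 eB.
  have -> : y2 ^+ 2 * - (two * x1 * y1) + two * y2 * - y1 * (K - (x1 * y2 + x2 * y1)) +
     (- y1) ^+ 2 * - (two * x2 * y2) = - (two * K * y1 * y2) by ring.
  exact/dvN/KK.
case: (unit_or_dv2 x1) => hx1; first by apply: caseX; left.
case: (unit_or_dv2 x2) => hx2; first by apply: caseX; right.
case: (unit_or_dv2 y1) => hy1; first by apply: caseY; left.
case: (unit_or_dv2 y2) => hy2; first by apply: caseY; right.
have [c1 [c2 [hc [h1 h2]]]] := K2 hτ.
have [d1 d2] := Inj c1 c2 (dvD (dvMl _ hx1) (dvMl _ hx2)) (dvD (dvMl _ hy1) (dvMl _ hy2)) h1 h2.
by exfalso; case: hc => hc; [apply: (unit_ndv2 hc d1) | apply: (unit_ndv2 hc d2)].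
Qed.

Definition aniso (ρ : R) := forall c1 c2 : R,
  (c1 \is a GRing.unit \/ c2 \is a GRing.unit) ->
  (c1 ^+ 2 + c1 * c2 + ρ * c2 ^+ 2) \is a GRing.unit.

Lemma S4_scalar β γ ρ x1 y1 x2 y2 t11 t12 t21 t22 :
  aniso ρ -> dv two β -> dv two γ ->
  two * x1 * y1 + Qf 0 β (two * γ) t11 t12 = two ->
  two * x2 * y2 + Qf 0 β (two * γ) t21 t22 = two * ρ ->
  x1 * y2 + x2 * y1 + Bf 0 β (two * γ) t11 t12 t21 t22 = 1 -> False.
Proof.
move=> han hβ hγ E1 E2 E3.
have hB : dv two (Bf 0 β (two * γ) t11 t12 t21 t22).
  rewrite /Bf !mul0r add0r; apply: dvD; first exact: dvMr.
  by rewrite -!mulrA; apply: dv_mul.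
have hy : y1 \is a GRing.unit \/ y2 \is a GRing.unit.
  case: (unit_or_dv2 y1) => h1; first by left.
  case: (unit_or_dv2 y2) => h2; first by right.
  exfalso; apply: (unit_ndv2 (unitr1 R)); apply: (dv_eq E3).
  apply: dvD => //; apply: dvD; [exact: dvMl h2 | exact: dvMl h1].
have eQ1 := addr_eqsub E1; have eQ2 := addr_eqsub E2; have eB := addr_eqsub E3.
have hq : Qf 0 β (two * γ) (y2 * t11 + - y1 * t21) (y2 * t12 + - y1 * t22) =
   two * (y2 ^+ 2 + y2 * - y1 + ρ * (- y1) ^+ 2).
  have -> : Qf 0 β (two * γ) (y2 * t11 + - y1 * t21) (y2 * t12 + - y1 * t22) =
     y2 ^+ 2 * Qf 0 β (two * γ) t11 t12 + two * y2 * - y1 * Bf 0 β (two * γ) t11 t12 t21 t22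
     + (- y1) ^+ 2 * Qf 0 β (two * γ) t21 t22 by rewrite /Qf /Bf; ring.
  rewrite eQ1 eQ2 eB; ring.
have h4 : dv (two * two) (Qf 0 β (two * γ) (y2 * t11 + - y1 * t21) (y2 * t12 + - y1 * t22)).
  rewrite /Qf mul0r add0r; apply: dvD.
    have -> : two * β * (y2 * t11 + - y1 * t21) * (y2 * t12 + - y1 * t22) =
      (two * β) * ((y2 * t11 + - y1 * t21) * (y2 * t12 + - y1 * t22)) by ring.
    by apply: dvMr; apply: dvM => //; apply: dv_refl.
  by rewrite -mulrA; apply: dvM; [apply: dv_refl | apply: dvMr].
move: h4; rewrite hq => /dv_cancel2 h.
have hu := han y2 (- y1); rewrite unitrN in hu.
apply: (unit_ndv2 _ h); apply: hu; by case: hy; [right|left].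
Qed.

Lemma S5_scalar β γ ρ x1 y1 x2 y2 t11 t12 t21 t22 :
  aniso ρ -> dv two β -> γ \is a GRing.unit ->
  two * x1 * y1 + Qf 0 β (two * γ) t11 t12 = two * two ->
  two * x2 * y2 + Qf 0 β (two * γ) t21 t22 = two * two * ρ ->
  x1 * y2 + x2 * y1 + Bf 0 β (two * γ) t11 t12 t21 t22 = two -> False.
Proof.
move=> han hβ hγ E1 E2 E3.
have hB : dv two (Bf 0 β (two * γ) t11 t12 t21 t22).
  rewrite /Bf !mul0r add0r; apply: dvD; first exact: dvMr.
  by rewrite -!mulrA; apply: dv_mul.
have hs : dv two (x1 * y2 + x2 * y1).
  by rewrite (addr_eqsub (etrans (addrC _ _) E3)); apply: dvB => //; apply: dv_refl.
have hΔ : dv two (x1 * y2 - y1 * x2).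
  have -> : x1 * y2 - y1 * x2 = (x1 * y2 + x2 * y1) - two * (x2 * y1) by ring.
  by apply: dvB => //; apply: dv_mul.
have [c1 [c2 [hc [hx hy]]]] := K2 hΔ.
set hx' := c1 * x1 + c2 * x2 in hx; set hy' := c1 * y1 + c2 * y2 in hy.
set z := c1 * t11 + c2 * t21; set w := c1 * t12 + c2 * t22.
have tot : two * hx' * hy' + Qf 0 β (two * γ) z w = two * two * (c1 ^+ 2 + c1 * c2 + ρ * c2 ^+ 2).
  have -> : two * hx' * hy' + Qf 0 β (two * γ) z w =
    c1 ^+ 2 * (two * x1 * y1 + Qf 0 β (two * γ) t11 t12)
    + two * c1 * c2 * (x1 * y2 + x2 * y1 + Bf 0 β (two * γ) t11 t12 t21 t22)
    + c2 ^+ 2 * (two * x2 * y2 + Qf 0 β (two * γ) t21 t22) by rewrite /hx' /hy' /z /w /Qf /Bf; ring.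
  rewrite E1 E2 E3; ring.
have tot2 : hx' * hy' + (β * z * w + γ * w ^+ 2) = two * (c1 ^+ 2 + c1 * c2 + ρ * c2 ^+ 2).
  apply: (mulfI two_neq0); rewrite [RHS]mulrA -tot /Qf; ring.
have hw : dv two w.
  apply: dv2_sq.
  have : dv two (γ * w ^+ 2).
    have -> : γ * w ^+ 2 = two * (c1 ^+ 2 + c1 * c2 + ρ * c2 ^+ 2) - hx' * hy' - β * z * w.
      by rewrite -tot2; ring.
    apply: dvB; last by rewrite -mulrA; apply: dvMr.
    by apply: dvB; [apply: dv_mul | apply: dvMr].
  by case/dv2_mul => // h; exfalso; apply: (unit_ndv2 hγ h).
have h4 : dv (two * two) (two * (c1 ^+ 2 + c1 * c2 + ρ * c2 ^+ 2)).
  rewrite -tot2; apply: dvD; first exact: dvM.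
  apply: dvD.
    have -> : β * z * w = β * (z * w) by ring.
    by apply: dvM => //; exact: dvMl.
  by rewrite expr2 mulrA; apply: dvM => //; exact: dvMl.
have := dv_cancel2 h4.
apply: unit_ndv2; exact: han.
Qed.

End Dyadic.

Section Mx.
Variable R : idomainType.
Local Notation two := (2%:R : R).
Local Notation dv := (@dvdR R).

Lemma sum2 (F : 'I_2 -> R) : \sum_(i < 2) F i = F 0 + F 1.
Proof. rewrite big_ord_recl big_ord1; congr (_ + F _); exact: val_inj. Qed.

Lemma mul2E m n (A : 'M[R]_(m,2)) (B : 'M[R]_(2,n)) i j :
  (A *m B) i j = A i 0 * B 0 j + A i 1 * B 1 j.
Proof. by rewrite mxE sum2. Qed.

Lemma det2 (A : 'M[R]_2) : \det A = A 0 0 * A 1 1 - A 0 1 * A 1 0.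
Proof.
rewrite (expand_det_row A 0) sum2 /cofactor !det_mx11 !mxE /=.
have -> : lift (0 : 'I_2) (0 : 'I_1) = 1 by apply: val_inj.
have -> : lift (1 : 'I_2) (0 : 'I_1) = 0 by apply: val_inj.
have -> : (0 + 1 %% 2)%N = 1%N by [].
rewrite expr0 expr1; ring.
Qed.

Lemma ord2P (i : 'I_2) : i = 0 \/ i = 1.
Proof. by case: i => [[|[|//]]] h; [left|right]; apply: val_inj. Qed.

Lemma hypE (i j : 'I_2) : hyp R i j = (if i == j then 0 else 1).
Proof. by rewrite mxE. Qed.

Lemma hyp00 : hyp R 0 0 = 0. Proof. by rewrite hypE. Qed.
Lemma hyp01 : hyp R 0 1 = 1. Proof. by rewrite hypE. Qed.
Lemma hyp10 : hyp R 1 0 = 1. Proof. by rewrite hypE. Qed.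
Lemma hyp11 : hyp R 1 1 = 0. Proof. by rewrite hypE. Qed.

Lemma hyp_tr : (hyp R)^T = hyp R.
Proof. by apply/matrixP => i j; rewrite !mxE eq_sym. Qed.

Lemma hyp_sq : hyp R *m hyp R = 1.
Proof.
apply/matrixP => i j; rewrite mul2E !hypE !mxE.
by case: (ord2P i) => ->; case: (ord2P j) => -> /=; rewrite ?mulr0 ?mul0r ?mulr1 ?add0r ?addr0.
Qed.

Lemma det_hyp : \det (hyp R) = -1.
Proof. by rewrite det2 hyp00 hyp11 hyp01 hyp10 mulr0 mulr1 sub0r. Qed.

Lemma qf2 m (X : 'M[R]_(m,2)) (G : 'M[R]_2) i j :
  (X *m G *m X^T) i j = (X i 0 * G 0 0 + X i 1 * G 1 0) * X j 0 + (X i 0 * G 0 1 + X i 1 * G 1 1) * X j 1.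
Proof. by rewrite mul2E !mul2E !mxE. Qed.

Lemma block_quad p (A B : 'M[R]_(p,2)) (M : 'M[R]_2) :
  row_mx A B *m block_mx (hyp R) 0 0 M *m (row_mx A B)^T = A *m hyp R *m A^T + B *m M *m B^T.
Proof.
by rewrite mul_row_block tr_row_mx mul_row_col !mulmx0 !addr0 !add0r.
Qed.

Definition rep_all n (G : 'M[R]_n) := forall N : 'M[R]_2, even_lattice N -> prim_represents G N.

Lemma rep_transfer n (G U : 'M[R]_n) : U \in unitmx -> rep_all G -> rep_all (U *m G *m U^T).
Proof.
move=> hU h N hN; have [X [hX [P [PP [h1 h2]]]]] := h N hN.
have UiU : invmx U *m U = 1 by rewrite mulVmx.
have UUi : U *m invmx U = 1 by rewrite mulmxV.
exists (X *m invmx U); split.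
  rewrite /representation trmx_mul -hX.
  have -> : X *m invmx U *m (U *m G *m U^T) *m ((invmx U)^T *m X^T)
    = X *m (invmx U *m U) *m G *m (U^T *m (invmx U)^T) *m X^T by rewrite !mulmxA.
  by rewrite UiU -trmx_mul UiU trmx1 !mulmx1.
exists (U *m P *m invmx U); split.
  have -> : U *m P *m invmx U *m (U *m P *m invmx U) = U *m (P *m (invmx U *m U) *m P) *m invmx U
    by rewrite !mulmxA.
  by rewrite UiU mulmx1 PP.
split.
  move=> v; have [c hc] := h1 (v *m U); exists c.
  by rewrite !mulmxA hc.
move=> c; have [v hv] := h2 c; exists (v *m invmx U).
rewrite mulmxA hv.
have -> : v *m invmx U *m (U *m P *m invmx U) = v *m (invmx U *m U) *m P *m invmx U by rewrite !mulmxA.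
by rewrite UiU mulmx1.
Qed.

Lemma iso_transfer n (G U H : 'M[R]_n) : U \in unitmx -> isometric (U *m G *m U^T) H -> isometric G H.
Proof.
move=> hU [V [hV e]]; exists (V *m U); split; first by rewrite unitmx_mul hV hU.
by rewrite -e trmx_mul !mulmxA.
Qed.

Lemma unitmx_det0 n (U : 'M[R]_n) : U \in unitmx -> \det U != 0.
Proof. by rewrite unitmxE => h; apply/eqP => e; move: h; rewrite e unitr0. Qed.

Lemma even_transfer n (G U : 'M[R]_n) : U \in unitmx -> even_lattice G -> even_lattice (U *m G *m U^T).
Proof.
move=> hU [[hs hd] he]; split; first split.
- by rewrite !trmx_mul trmxK hs mulmxA.
- by rewrite !det_mulmx det_tr !mulf_neq0 // unitmx_det0.
move=> v; have := he (v *m U).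
by rewrite trmx_mul !mulmxA.
Qed.


Lemma prim_inj m n (G : 'M[R]_m) (N : 'M[R]_n) (X : 'M[R]_(n, m)) : two != 0 ->
  representation G N X -> \det N != 0 -> primitive_image X ->
  forall c : 'rV[R]_n, (forall j, dv two ((c *m X) 0 j)) -> forall i, dv two (c 0 i).
Proof.
move=> h20 hX hN [P [PP [h1 h2]]] c hc.
have [q hq] := fin_all_exists (fun j => hc j).
pose y : 'rV[R]_m := \row_j q j.
have ey : c *m X = two *: y.
  apply/matrixP => i j; rewrite (ord1 i) hq !mxE //.
have [v hv] := h2 c.
have yP : y *m P = y.
  apply/matrixP => i j; apply: (mulfI h20).
  have : (two *: (y *m P)) i j = (two *: y) i j.
    by rewrite scalemxAl -ey hv -mulmxA PP -hv ey.
  by rewrite !mxE.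
have [c' hc'] := h1 y.
have e0 : (c - two *: c') *m X = 0.
  by rewrite mulmxBl -scalemxAl -hc' yP ey subrr.
have e1 : (c - two *: c') *m N = 0.
  by rewrite -hX !mulmxA e0 !mul0mx.
have e2 : \det N *: (c - two *: c') = 0.
  by rewrite -mul_mx_scalar -mul_mx_adj mulmxA e1 mul0mx.
have e3 : c = two *: c'.
  apply/eqP; rewrite -subr_eq0; apply/eqP.
  by move/eqP: e2; rewrite scalemx_eq0 (negbTE hN) /= => /eqP.
move=> i; rewrite e3 mxE; exact: dv_mul.
Qed.

End Mx.

Section S0.
Variable R : idomainType.
Hypothesis hR : dyadic_local_integers R.
Local Notation two := (2%:R : R).
Local Notation dv := (@dvdR R).

Lemma sum4 (F : 'I_4 -> R) : \sum_(k < 4) F k = F (inord 0) + F (inord 1) + F (inord 2) + F (inord 3).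
Proof.
rewrite !big_ord_recl big_ord0 addr0 !addrA.
by congr (_ + _ + _ + _); congr F; apply: val_inj => /=; rewrite inordK.
Qed.

Definition minor (A : 'M[R]_(2,4)) (i j : 'I_4) := A 0 i * A 1 j - A 0 j * A 1 i.

Lemma CB (A B : 'M[R]_(2,4)) : \det (A *m B^T) =
  minor A (inord 0) (inord 1) * minor B (inord 0) (inord 1) +
  minor A (inord 0) (inord 2) * minor B (inord 0) (inord 2) +
  minor A (inord 0) (inord 3) * minor B (inord 0) (inord 3) +
  minor A (inord 1) (inord 2) * minor B (inord 1) (inord 2) +
  minor A (inord 1) (inord 3) * minor B (inord 1) (inord 3) +
  minor A (inord 2) (inord 3) * minor B (inord 2) (inord 3).
Proof.
rewrite det2 !mxE !sum4 /minor !mxE; ring.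
Qed.

Lemma unit_sum (a b : R) : (a + b) \is a GRing.unit -> a \is a GRing.unit \/ b \is a GRing.unit.
Proof.
move=> h; case: (unit_or_dv2 hR a) => ha; first by left.
case: (unit_or_dv2 hR b) => hb; first by right.
by exfalso; apply: (unit_ndv2 hR h); apply: dvD.
Qed.


Lemma perm2 (i j : 'I_4) : i != j -> exists s : 'S_4, s (inord 0) = i /\ s (inord 1) = j.
Proof.
move=> hij.
pose o0 : 'I_4 := inord 0; pose o1 : 'I_4 := inord 1.
have o01 : o0 != o1 by apply/eqP => /(congr1 val) /=; rewrite !inordK.
pose j' := tperm o0 i j.
exists (tperm o1 j' * tperm o0 i)%g; split; rewrite permM -/o0 -/o1.
  have j'0 : j' != o0.
    apply/eqP => e.
    have : tperm o0 i j' = tperm o0 i o0 by rewrite e.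
    by rewrite /j' tpermK tpermL => e2; move: hij; rewrite e2 eqxx.
  by rewrite (@tpermD _ o1 j' o0) ?tpermL // eq_sym.
by rewrite tpermL /j' tpermK.
Qed.


Lemma S0 (G : 'M[R]_4) (X : 'M[R]_(2,4)) : G^T = G -> X *m G *m X^T = hyp R ->
  exists (U : 'M[R]_4) (M : 'M[R]_2), U \in unitmx /\ U *m G *m U^T = block_mx (hyp R) 0 0 M.
Proof.
move=> hG hX.
pose Y := hyp R *m X *m G.
have XY : X *m Y^T = 1.
  by rewrite /Y !trmx_mul hG hyp_tr !mulmxA hX hyp_sq.
have hu : (\det (X *m Y^T)) \is a GRing.unit by rewrite XY det1 unitr1.
rewrite CB in hu.
have key : exists i j : 'I_4, i != j /\ minor X i j \is a GRing.unit.
  have T : forall a b : 'I_4, a != b -> (minor X a b * minor Y a b) \is a GRing.unit ->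
      exists i j : 'I_4, i != j /\ minor X i j \is a GRing.unit.
    by move=> a b hab; rewrite unitrM => /andP[h _]; exists a, b.
  have ne : forall a b, (a < 4)%N -> (b < 4)%N -> a != b -> (inord a : 'I_4) != inord b.
    by move=> a b ha hb hab; apply/eqP => /(congr1 val) /=; rewrite !inordK //; apply/eqP.
  case/unit_sum: hu => [/unit_sum [/unit_sum [/unit_sum [/unit_sum [|]|]|]|]|] h;
    by apply: (T _ _ _ h); apply: ne.
case: key => i [j [hij hm]].
have [s [s0 s1]] := perm2 hij.
pose Pm : 'M[R]_4 := perm_mx s.
pose X1 : 'M[R]_(2, 2 + 2) := col_perm s X.
have eX1 : X1 = X *m Pm^T by rewrite /X1 col_permE tr_perm_mx.
pose G1 := Pm *m G *m Pm^T.
have PtP : Pm^T *m Pm = 1 by rewrite tr_perm_mx -perm_mxM mulVg perm_mx1.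
have hX1 : X1 *m G1 *m X1^T = hyp R.
  rewrite eX1 /G1 trmx_mul trmxK.
  have -> : X *m Pm^T *m (Pm *m G *m Pm^T) *m (Pm *m X^T)
     = X *m (Pm^T *m Pm) *m G *m (Pm^T *m Pm) *m X^T by rewrite !mulmxA.
  by rewrite PtP !mulmx1.
have hG1 : G1^T = G1 by rewrite /G1 !trmx_mul trmxK hG !mulmxA.
pose A : 'M[R]_2 := lsubmx X1.
pose B : 'M[R]_2 := rsubmx X1.
have l0 : lshift 2 (0 : 'I_2) = inord 0 :> 'I_4 by apply: val_inj; rewrite /= inordK.
have l1 : lshift 2 (1 : 'I_2) = inord 1 :> 'I_4 by apply: val_inj; rewrite /= inordK.
have detA : \det A = minor X i j.
  by rewrite det2 /A /X1 !mxE l0 l1 s0 s1.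
pose Z : 'M[R]_(2, 2 + 2) := row_mx 0 1%:M.
pose U0 : 'M[R]_(2 + 2) := block_mx A B 0 1%:M.
have U0e : U0 = col_mx X1 Z by rewrite /U0 /block_mx /A /B hsubmxK.
have hU0 : U0 \in unitmx by rewrite unitmxE /U0 det_ublock det1 mulr1 detA.
pose C := X1 *m G1 *m Z^T.
pose D := Z *m G1 *m Z^T.
have G0e : U0 *m G1 *m U0^T = block_mx (hyp R) C C^T D.
  rewrite U0e tr_col_mx mul_col_mx mul_col_row hX1; congr block_mx.
  by rewrite /C !trmx_mul !trmxK hG !mulmxA.
pose K := - (C^T *m hyp R).
pose U3 : 'M[R]_(2 + 2) := block_mx 1%:M 0 K 1%:M.
have hU3 : U3 \in unitmx by rewrite unitmxE det_lblock !det1 mulr1 unitr1.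
have G'e : U3 *m (block_mx (hyp R) C C^T D) *m U3^T = block_mx (hyp R) 0 0 (D - C^T *m hyp R *m C).
  rewrite /U3 tr_block_mx !mulmx_block !mul1mx !mul0mx !addr0 trmx1 trmx0 !mulmx1 !mulmx0 !addr0.
  have KH : K *m hyp R = - C^T by rewrite /K mulNmx -mulmxA hyp_sq mulmx1.
  have HKt : hyp R *m K^T = - C by rewrite /K linearN /= trmx_mul hyp_tr trmxK mulmxN mulmxA hyp_sq mul1mx.
  rewrite KH HKt !addNr mul0mx add0r /K mulNmx addrC.
  by congr block_mx.
exists (U3 *m U0 *m Pm), (D - C^T *m hyp R *m C); split.
  by rewrite !unitmx_mul hU3 hU0 unitmx_perm.
by rewrite -G'e -G0e /G1 !trmx_mul !mulmxA.
Qed.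

End S0.

Section P4.
Variable R : idomainType.
Local Notation two := (2%:R : R).
Local Notation dv := (@dvdR R).

Definition mk2 (a b c d : R) : 'M[R]_2 :=
  \matrix_(i < 2, j < 2) if i == 0 then (if j == 0 then a else b) else (if j == 0 then c else d).
Definition M2 (a b c : R) := mk2 a b b c.

Lemma mk2_00 a b c d : mk2 a b c d 0 0 = a. Proof. by rewrite mxE. Qed.
Lemma mk2_01 a b c d : mk2 a b c d 0 1 = b. Proof. by rewrite mxE. Qed.
Lemma mk2_10 a b c d : mk2 a b c d 1 0 = c. Proof. by rewrite mxE. Qed.
Lemma mk2_11 a b c d : mk2 a b c d 1 1 = d. Proof. by rewrite mxE. Qed.

Lemma mk2_tr a b c d : (mk2 a b c d)^T = mk2 a c b d.
Proof.
apply/matrixP => i j; rewrite mxE.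
by case: (ord2P i) => ->; case: (ord2P j) => ->; rewrite !(mk2_00, mk2_01, mk2_10, mk2_11).
Qed.

Lemma det_mk2 a b c d : \det (mk2 a b c d) = a * d - b * c.
Proof. by rewrite det2 mk2_00 mk2_01 mk2_10 mk2_11. Qed.

Lemma even_M2 a b c : dv two a -> dv two c -> a * c - b * b != 0 -> even_lattice (M2 a b c).
Proof.
move=> ha hc hd; split; first split.
- by rewrite /M2 mk2_tr.
- by rewrite /M2 det_mk2.
move=> v; rewrite qf2 /M2 mk2_00 mk2_01 mk2_10 mk2_11.
have -> : (v 0 0 * a + v 0 1 * b) * v 0 0 + (v 0 0 * b + v 0 1 * c) * v 0 1
   = a * v 0 0 ^+ 2 + two * (b * v 0 0 * v 0 1) + c * v 0 1 ^+ 2 by ring.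
by apply: dvD; [apply: dvD; [apply: dvMr | apply: dv_mul] | apply: dvMr].
Qed.

Lemma rep_eqs (M N : 'M[R]_2) (X : 'M[R]_(2, 2 + 2)) : M 1 0 = M 0 1 ->
  representation (block_mx (hyp R) 0 0 M) N X ->
  [/\ two * lsubmx X 0 0 * lsubmx X 0 1 + Qf (M 0 0) (M 0 1) (M 1 1) (rsubmx X 0 0) (rsubmx X 0 1) = N 0 0,
      two * lsubmx X 1 0 * lsubmx X 1 1 + Qf (M 0 0) (M 0 1) (M 1 1) (rsubmx X 1 0) (rsubmx X 1 1) = N 1 1 &
      lsubmx X 0 0 * lsubmx X 1 1 + lsubmx X 1 0 * lsubmx X 0 1 +
        Bf (M 0 0) (M 0 1) (M 1 1) (rsubmx X 0 0) (rsubmx X 0 1) (rsubmx X 1 0) (rsubmx X 1 1) = N 0 1].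
Proof.
move=> hM; rewrite /representation -{1 2}(hsubmxK X) block_quad => <-.
have addE : forall (P Q : 'M[R]_2) i j, (P + Q) i j = P i j + Q i j by move=> P Q i j; rewrite mxE.
rewrite !addE !qf2 hyp00 hyp01 hyp10 hyp11 hM /Qf /Bf.
split; ring.
Qed.

Lemma inj_eqs (X : 'M[R]_(2, 2 + 2)) :
  (forall c : 'rV[R]_2, (forall j, dv two ((c *m X) 0 j)) -> forall i, dv two (c 0 i)) ->
  forall c1 c2,
  dv two (c1 * lsubmx X 0 0 + c2 * lsubmx X 1 0) -> dv two (c1 * lsubmx X 0 1 + c2 * lsubmx X 1 1) ->
  dv two (c1 * rsubmx X 0 0 + c2 * rsubmx X 1 0) -> dv two (c1 * rsubmx X 0 1 + c2 * rsubmx X 1 1) ->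
  dv two c1 /\ dv two c2.
Proof.
move=> H c1 c2 h1 h2 h3 h4.
pose c : 'rV[R]_2 := \row_(i < 2) (if i == 0 then c1 else c2).
have c0 : c 0 0 = c1 by rewrite mxE.
have c1e : c 0 1 = c2 by rewrite mxE.
have hc := H c.
split; [rewrite -c0 | rewrite -c1e]; apply: hc => j;
  rewrite -(hsubmxK X) mul_mx_row -[j]splitK; case: (split j) => k /=;
  rewrite ?row_mxEl ?row_mxEr mul2E c0 c1e; by case: (ord2P k) => ->.
Qed.

Lemma block_conj (V M : 'M[R]_2) :
  block_mx 1%:M 0 0 V *m block_mx (hyp R) 0 0 M *m (block_mx 1%:M 0 0 V)^T = block_mx (hyp R) 0 0 (V *m M *m V^T).
Proof.
rewrite tr_block_mx !mulmx_block !mul1mx !mul0mx !mulmx0 !addr0 !add0r trmx1 trmx0 !mulmx1 !mulmx0.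
by rewrite !mul0mx !addr0 !add0r.
Qed.

Lemma block_conj_unit (V : 'M[R]_2) : V \in unitmx -> (block_mx 1%:M 0 0 V : 'M[R]_(2 + 2)) \in unitmx.
Proof. by rewrite !unitmxE det_ublock det1 mul1r. Qed.


Lemma mk2_eq (P : 'M[R]_2) a b c d : P 0 0 = a -> P 0 1 = b -> P 1 0 = c -> P 1 1 = d -> P = mk2 a b c d.
Proof.
move=> h1 h2 h3 h4; apply/matrixP => i j.
by case: (ord2P i) => ->; case: (ord2P j) => ->; rewrite !(mk2_00, mk2_01, mk2_10, mk2_11).
Qed.

Hypothesis hR : dyadic_local_integers R.

Lemma S2 (M : 'M[R]_2) r : M 1 0 = M 0 1 -> M 0 1 ^+ 2 - M 0 0 * M 1 1 = r ^+ 2 ->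
  dv two (M 1 1) -> dv two (M 0 0) ->
  exists (V : 'M[R]_2) (β γ : R), V \in unitmx /\ V *m M *m V^T = M2 0 β (two * γ).
Proof.
move=> hs hr [γ2 h2] [γ0 h0].
have [p0 [p1 [hu hq]]] : exists p0 p1, (p0 \is a GRing.unit \/ p1 \is a GRing.unit) /\
    Qf (M 0 0) (M 0 1) (M 1 1) p0 p1 = 0.
  case: (eqVneq (M 0 0) 0) => hm0.
    exists 1, 0; split; first by left; rewrite unitr1.
    by rewrite /Qf hm0; ring.
  have [e [z [w [ez [ew hzw]]]]] := content hR (or_intror hm0 : r - M 0 1 != 0 \/ M 0 0 != 0).
  exists z, w; split => //.
  have e1 : Qf (M 0 0) (M 0 1) (M 1 1) (r - M 0 1) (M 0 0) = 0.
    have -> : Qf (M 0 0) (M 0 1) (M 1 1) (r - M 0 1) (M 0 0) =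
       M 0 0 * (r ^+ 2 - (M 0 1 ^+ 2 - M 0 0 * M 1 1)) by rewrite /Qf; ring.
    by rewrite hr subrr mulr0.
  have e2 : (two ^+ e) ^+ 2 * Qf (M 0 0) (M 0 1) (M 1 1) z w =
     Qf (M 0 0) (M 0 1) (M 1 1) (two ^+ e * z) (two ^+ e * w) by rewrite /Qf; ring.
  rewrite -ez -ew e1 in e2.
  move/eqP: e2; rewrite mulf_eq0 expf_eq0 /= expf_eq0 (negbTE (two_neq0 hR)) andbF /=.
  by move/eqP.
have VM : forall (V : 'M[R]_2), V 0 0 = p0 -> V 0 1 = p1 ->
    (V *m M *m V^T) 0 0 = 0.
  move=> V h00 h01; rewrite qf2 h00 h01 hs -hq /Qf; ring.
case: hu => hu.
  exists (mk2 p0 p1 0 1), (p0 * M 0 1 + p1 * M 1 1), γ2; split.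
    by rewrite unitmxE det_mk2 mulr1 mulr0 subr0.
  apply: mk2_eq; first by apply: VM; rewrite ?mk2_00 ?mk2_01.
  - by rewrite qf2 !(mk2_00, mk2_01, mk2_10, mk2_11) hs; ring.
  - by rewrite qf2 !(mk2_00, mk2_01, mk2_10, mk2_11) hs; ring.
  - by rewrite qf2 !(mk2_00, mk2_01, mk2_10, mk2_11) hs h2; ring.
exists (mk2 p0 p1 1 0), (p0 * M 0 0 + p1 * M 0 1), γ0; split.
  by rewrite unitmxE det_mk2 mulr0 mulr1 sub0r unitrN.
apply: mk2_eq; first by apply: VM; rewrite ?mk2_00 ?mk2_01.
- by rewrite qf2 !(mk2_00, mk2_01, mk2_10, mk2_11) hs; ring.
- by rewrite qf2 !(mk2_00, mk2_01, mk2_10, mk2_11) hs; ring.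
- by rewrite qf2 !(mk2_00, mk2_01, mk2_10, mk2_11) hs h0; ring.
Qed.

End P4.

Section P5.
Variable R : idomainType.
Hypothesis hR : dyadic_local_integers R.
Local Notation two := (2%:R : R).
Local Notation dv := (@dvdR R).

Lemma Mprops (M : 'M[R]_2) : even_lattice (block_mx (hyp R) 0 0 M : 'M[R]_(2 + 2)) ->
  [/\ M 1 0 = M 0 1, dv two (M 0 0), dv two (M 1 1) & \det M != 0].
Proof.
move=> [[hs hd] he].
have hM : M^T = M.
  by move: hs; rewrite tr_block_mx hyp_tr !trmx0 => /eq_block_mx [_ _ _].
have ev : forall w : 'rV[R]_2, dv two ((w *m M *m w^T) 0 0).
  move=> w; have := he (row_mx 0 w).
  by rewrite block_quad !mul0mx add0r.
pose e0 : 'rV[R]_2 := \row_j (if j == 0 then 1 else 0).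
pose e1 : 'rV[R]_2 := \row_j (if j == 0 then 0 else 1).
split.
- by rewrite -[in LHS]hM mxE.
- by have := ev e0; rewrite qf2 !mxE /=; congr dvdR; ring.
- by have := ev e1; rewrite qf2 !mxE /=; congr dvdR; ring.
- by move: hd; rewrite det_ublock det_hyp mulN1r oppr_eq0.
Qed.


Lemma hyp_mk2 : hyp R = mk2 0 1 1 0.
Proof. by apply: mk2_eq; rewrite ?hyp00 ?hyp01 ?hyp10 ?hyp11. Qed.

Lemma M2_sym (a b c : R) : M2 a b c 1 0 = M2 a b c 0 1.
Proof. by rewrite /M2 mk2_10 mk2_01. Qed.

Lemma nz_aux (ρ : R) : two * two * ρ - 1 != 0.
Proof.
apply/eqP => e.
have h1 : two * two * ρ = 1 by apply/eqP; rewrite -subr_eq0 e.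
apply: (unit_ndv2 hR (unitr1 R)); apply: (dv_eq h1); rewrite -mulrA; exact: dv_mul.
Qed.

Lemma main2 (M : 'M[R]_2) : even_lattice (block_mx (hyp R) 0 0 M : 'M[R]_(2 + 2)) ->
  rep_all (block_mx (hyp R) 0 0 M : 'M[R]_(2 + 2)) ->
  isometric (block_mx (hyp R) 0 0 M : 'M[R]_(2 + 2)) (hyp2 R).
Proof.
move=> hE hrep; have [hs he0 he1 hdet] := Mprops hE.
have hDnz : M 0 1 ^+ 2 - M 0 0 * M 1 1 != 0.
  by move: hdet; rewrite det2 hs -oppr_eq0 opprB expr2.
have [d [δ [hδ hD]]] := hR_val hR hDnz.
pose k := (d + 2)%N.
have hdN : \det (M2 0 (two ^+ k) 0) != 0.
  by rewrite /M2 det_mk2 mul0r sub0r oppr_eq0 mulf_neq0 // expf2_neq0.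
have hN : even_lattice (M2 0 (two ^+ k) 0).
  apply: even_M2; [apply: dv0 | apply: dv0 |].
  by rewrite mul0r sub0r oppr_eq0 mulf_neq0 // expf2_neq0.
have [X [hX hP]] := hrep _ hN.
have [e1 e2 e3] := rep_eqs hs hX.
rewrite /M2 mk2_00 mk2_11 mk2_01 in e1 e2 e3.
have Inj := inj_eqs (prim_inj (two_neq0 hR) hX hdN hP).
have [r hr] := S1_scalar hR hδ hD e1 e2 e3 Inj.
have [V [β [γ [hV eV]]]] := S2 hR hs hr he1 he0.
have hU2 := block_conj_unit hV.
have eG := block_conj V M; rewrite eV in eG.
apply: (iso_transfer hU2); rewrite eG.
have hrep2 := rep_transfer hU2 hrep; rewrite eG in hrep2.
case: (unit_or_dv2 hR β) => hβ.
  pose u := β^-1.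
  have hu : β * u = 1 by rewrite mulrV.
  pose V3 := mk2 1 0 (- (γ * u * u)) u.
  exists (block_mx 1%:M 0 0 V3); split.
    by apply: block_conj_unit; rewrite unitmxE det_mk2 mul1r mul0r subr0 unitrV.
  rewrite block_conj /hyp2; congr block_mx.
  rewrite hyp_mk2; apply: mk2_eq; rewrite qf2 /V3 /M2 !(mk2_00, mk2_01, mk2_10, mk2_11).
  - by ring.
  - by rewrite -[RHS]hu; ring.
  - by rewrite -[RHS]hu; ring.
  - have -> : (- (γ * u * u) * 0 + u * β) * - (γ * u * u) + (- (γ * u * u) * β + u * (two * γ)) * u
       = two * γ * u * u * (1 - β * u) by ring.
    by rewrite hu subrr mulr0.
have [ρ hρ] := exists_aniso hR.
have hs2 := M2_sym 0 β (two * γ).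
case: (unit_or_dv2 hR γ) => hγ.
  have hN2 : even_lattice (M2 (two * two) two (two * two * ρ)).
    apply: even_M2; [exact: dv_mul | rewrite -mulrA; exact: dv_mul |].
    have -> : two * two * (two * two * ρ) - two * two = two * two * (two * two * ρ - 1) by ring.
    by rewrite !mulf_neq0 ?two_neq0 ?nz_aux.
  have [X2 [hX2 _]] := hrep2 _ hN2.
  have [f1 f2 f3] := rep_eqs hs2 hX2.
  rewrite /M2 !(mk2_00, mk2_01, mk2_10, mk2_11) in f1 f2 f3.
  by case: (S5_scalar hR hρ hβ hγ f1 f2 f3).
have hN1 : even_lattice (M2 two 1 (two * ρ)).
  apply: even_M2; [exact: dv_refl | exact: dv_mul |].
  by rewrite mulr1 mulrA nz_aux.
have [X2 [hX2 _]] := hrep2 _ hN1.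
have [f1 f2 f3] := rep_eqs hs2 hX2.
rewrite /M2 !(mk2_00, mk2_01, mk2_10, mk2_11) in f1 f2 f3.
by case: (S4_scalar hR hρ hβ hγ f1 f2 f3).
Qed.

Theorem proposition4p2' (hR' : dyadic_local_integers R) (G : 'M[R]_4) :
  even_lattice G ->
  (forall G2 : 'M[R]_2, even_lattice G2 -> prim_represents G G2) ->
  isometric G (hyp2 R).
Proof.
move=> hE hrep.
have hH : even_lattice (hyp R).
  rewrite hyp_mk2; apply: even_M2; [exact: dv0 | exact: dv0 |].
  by rewrite mul0r mulr1 sub0r oppr_eq0 oner_neq0.
have [X [hX _]] := hrep _ hH.
have [U [M [hU eU]]] := S0 hR hE.1.1 hX.
apply: (iso_transfer hU); rewrite eU.
apply: main2.
  by rewrite -eU; apply: even_transfer.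
by rewrite -eU; apply: rep_transfer.
Qed.

End P5.

Unset Implicit Arguments.

Theorem proposition4p2 (R : idomainType) (hR : dyadic_local_integers R)
  (G : 'M[R]_4) :
  even_lattice G ->
  (forall G2 : 'M[R]_2, even_lattice G2 -> prim_represents G G2) ->
  isometric G (hyp2 R).
Proof. exact: (@proposition4p2' R hR hR G). Qed.
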